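(* Let $\varphi\colon A^*\to A^*$ be a non-erasing substitution extending over $a\in A$, let $I_\varphi$ be the set of $\varphi$-growing letters, and suppose the set $B_\varphi$ of $\varphi$-bounded factors of $\varphi^{\infty}(a)$ (including the empty word) is finite. Let $C$ be the finite alphabet of symbols $[twt']$ with $t,t'\in I_\varphi$, $w\in B_\varphi$ and $twt'$ a factor of $\varphi^{\infty}(a)$, and define $\psi\colon C^*\to C^*$ by $\psi([twt'])=[t_1w_1t_2][t_2w_2t_3]\cdots[t_kw_kt_{k+1}]$, where $\varphi(tw)=w_0t_1w_1t_2\cdots t_kw_k'$ with $t_i\in I_\varphi$ and $w_i,w_k'\in B_\varphi$, $\varphi(t')$ begins with $w_k''t_{k+1}$ with $t_{k+1}\in I_\varphi$, $w_k''\in B_\varphi$, and $w_k=w_k'w_k''$. Then every letter of $C$ is $\psi$-growing.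
   Context: A substitution is non-erasing if no letter is mapped to the empty word. $\varphi$ extends over $a$ if $\varphi(a)=av$ with $\varphi^k(v)\neq\varepsilon$ for all $k$, and then $\varphi^{\infty}(a)=av\varphi(v)\varphi^2(v)\cdots$. A finite word $w$ is $\varphi$-bounded if the sequence $(|\varphi^n(w)|)_n$ is bounded (equivalently $w,\varphi(w),\varphi^2(w),\dots$ is ultimately periodic), and $\varphi$-growing otherwise; a letter $c\in C$ is $\psi$-growing if $|\psi^n(c)|\to\infty$. *)

(* Defs.v *)
From mathcomp Require Import all_boot.
Set Implicit Arguments. Unset Strict Implicit. Unset Printing Implicit Defensive.

Section Subst.
Variable A : finType.
Variable phi : A -> seq A.

Definition phiw (w : seq A) : seq A := flatten (map phi w).

Definition non_erasing : Prop := forall c, phi c <> [::].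

Definition extends_over (a : A) : Prop :=
  exists v, phi a = a :: v /\ forall k, iter k phiw v <> [::].

(* phi^oo(a): its n-th letter is the n-th letter of phi^(n+1)(a)
   (which has length >= n+2 when phi extends over a). *)
Definition phi_inf (a : A) (n : nat) : A := nth a (iter n.+1 phiw [:: a]) n.

Definition factor_of (x : nat -> A) (w : seq A) : Prop :=
  exists i, forall j, j < size w -> x (i + j) = nth (x i) w j.

Definition bounded (w : seq A) : Prop :=
  exists M, forall n, size (iter n phiw w) <= M.

Definition growing_letter (c : A) : Prop :=
  forall M, exists N, forall n, N <= n -> M <= size (iter n phiw [:: c]).

(* Cutting a word x at the occurrences of letters of I lying in its first
   k positions: each growing occurrence t_i (position p < k) gives the symbol
   t_i w_i t_(i+1), running up to and including the next occurrence of a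
   letter of I in x. *)
Definition cut (I : pred A) (d : A) (x : seq A) (k : nat) : seq (seq A) :=
  [seq take (find I (drop p.+1 x)).+2 (drop p x) | p <- iota 0 k & I (nth d x p)].

(* psi on a symbol [t w t'] (represented as the word t :: w ++ [:: t']):
   cut phi(t w) phi(t') at the growing letters of phi(t w). *)
Definition psi_sym (I : pred A) (c : seq A) : seq (seq A) :=
  match c with
  | [::] => [::]
  | x0 :: s => let u := phiw (belast x0 s) in cut I x0 (u ++ phi (last x0 s)) (size u)
  end.

Definition psiw (I : pred A) (cs : seq (seq A)) : seq (seq A) :=
  flatten (map (psi_sym I) cs).

Definition psi_growing (I : pred A) (c : seq A) : Prop :=
  forall M, exists N, forall n, N <= n -> M <= size (iter n (psiw I) [:: c]).

Definition in_C (I : pred A) (a : A) (c : seq A) : Prop :=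
  exists t w t', [/\ c = t :: w ++ [:: t'], t \in I, t' \in I,
                  factor_of (phi_inf a) w /\ bounded w & factor_of (phi_inf a) c].

End Subst.

(* Main.v *)
Require Import Defs.
From mathcomp Require Import all_boot.
From mathcomp Require Import zify.
From Stdlib Require Import Classical.
Set Implicit Arguments. Unset Strict Implicit. Unset Printing Implicit Defensive.

Section Aux.
Variable A : finType.
Variable phi : A -> seq A.
Variable I : pred A.
Hypothesis Hne : non_erasing phi.
Hypothesis HI : forall c, c \in I <-> growing_letter phi c.

Lemma phiw_cat u v : phiw phi (u ++ v) = phiw phi u ++ phiw phi v.
Proof. by rewrite /phiw map_cat flatten_cat. Qed.

Lemma phiw_cons x u : phiw phi (x :: u) = phi x ++ phiw phi u.
Proof. by []. Qed.

Lemma phiw1 x : phiw phi [:: x] = phi x.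
Proof. by rewrite /phiw /= cats0. Qed.

Lemma iter_cat n u v : iter n (phiw phi) (u ++ v) = iter n (phiw phi) u ++ iter n (phiw phi) v.
Proof. elim: n => //= n IH; by rewrite IH phiw_cat. Qed.

Lemma size_phiw u : size u <= size (phiw phi u).
Proof.
elim: u => // x u IH; rewrite phiw_cons size_cat /=.
have : 0 < size (phi x) by case E: (phi x) => //; have := @Hne x; rewrite E.
lia.
Qed.

Lemma size_iter_mono n m u : n <= m -> size (iter n (phiw phi) u) <= size (iter m (phiw phi) u).
Proof.
elim: m => [|m IH]; first by rewrite leqn0 => /eqP->.
rewrite leq_eqVlt => /orP[/eqP->//|]; rewrite ltnS => /IH H.
apply: (leq_trans H); exact: size_phiw.
Qed.

Lemma notI_bounded b : ~~ I b -> bounded phi [:: b].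
Proof.
move=> Hb; case: (classic (bounded phi [:: b])) => // Hnb; exfalso.
suff H: b \in I by exact: (negP Hb) H.
apply/HI => M.
case: (classic (exists n, M <= size (iter n (phiw phi) [:: b]))) => [[n Hn]|Hn].
  exists n => m Hm; apply: (leq_trans Hn); exact: size_iter_mono.
exfalso; apply: Hnb; exists M => n.
case: (leqP (size (iter n (phiw phi) [:: b])) M) => // H.
by exfalso; apply: Hn; exists n; apply: ltnW.
Qed.

Lemma bounded_cat u v : bounded phi u -> bounded phi v -> bounded phi (u ++ v).
Proof.
move=> [M1 H1] [M2 H2]; exists (M1 + M2) => n.
by rewrite iter_cat size_cat; apply: leq_add.
Qed.

Lemma allnotI_bounded u : all (predC I) u -> bounded phi u.
Proof.
elim: u => [|x u IH] /=; first by exists 0 => n; have -> : iter n (phiw phi) [::] = [::] by elim: n => //= n ->.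
move=> /andP[Hx Hu]; rewrite -cat1s; apply: bounded_cat; [exact: notI_bounded | exact: IH].
Qed.

Lemma notI_image b : ~~ I b -> all (predC I) (phi b).
Proof.
move=> Hb; apply/allP => z Hz /=; apply/negP => Iz.
suff H: b \in I by exact: (negP Hb) H.
apply/HI => M.
have /HI Gz : z \in I by [].
have [N HN] := Gz M.
exists N.+1 => n Hn.
case: n Hn => // n; rewrite ltnS => Hn.
rewrite iterSr phiw1.
have [l [r ->]] : exists l r, phi b = l ++ z :: r.
  exists (take (index z (phi b)) (phi b)), (drop (index z (phi b)).+1 (phi b)).
  by rewrite -{1}(cat_take_drop (index z (phi b)) (phi b)) (drop_nth z) ?index_mem // nth_index.
rewrite -cat1s !iter_cat !size_cat.
move: (HN n Hn) => H; rewrite addnCA; exact: leq_trans H (leq_addr _ _).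
Qed.

Lemma I_image t : I t -> has I (phi t).
Proof.
move=> It; apply/negPn/negP => Hn.
have /HI Gt : t \in I by [].
have [M HM] : bounded phi (phi t) by apply: allnotI_bounded; rewrite all_predC.
have [N HN] := Gt M.+1.
have := HN N.+1 (leqnSn N).
rewrite iterSr phiw1.
have := HM N; lia.
Qed.

Lemma filter_allC (s : seq A) : all (predC I) s -> filter I s = [::].
Proof. elim: s => //= x s IH /andP[/negbTE -> /IH ->]. by []. Qed.

Lemma filter_phiw w : filter I (phiw phi w) = filter I (phiw phi (filter I w)).
Proof.
elim: w => //= x w IH; case Ix: (I x); rewrite ?phiw_cons !filter_cat IH //.
by rewrite filter_allC ?cat0s //; apply: notI_image; rewrite Ix.
Qed.

Definition bl (c : seq A) := if c is x0 :: s then belast x0 s else [::].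
Definition inv (c : seq A) : bool := if c is x0 :: s then I (last x0 s) else false.
Definition W (cs : seq (seq A)) := flatten (map (fun c => filter I (bl c)) cs).

Lemma filter_take_find y : filter I (take (find I y) y) = [::].
Proof. elim: y => //= x y IH; case Ix: (I x) => //=; by rewrite Ix. Qed.

Lemma has_drop n (s : seq A) : has I (drop n s) -> has I s.
Proof. by rewrite -{2}(cat_take_drop n s) has_cat => ->; rewrite orbT. Qed.

Lemma piece d x p : p < size x -> I (nth d x p) -> has I (drop p.+1 x) ->
  inv (take (find I (drop p.+1 x)).+2 (drop p x)) /\ filter I (bl (take (find I (drop p.+1 x)).+2 (drop p x))) = [:: nth d x p].
Proof.
move=> Hp Ip Hh; rewrite (drop_nth d Hp) /=.
set y := drop p.+1 x.
have Hj : find I y < size y by rewrite -has_find.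
by rewrite (take_nth d Hj) /= belast_rcons last_rcons nth_find //= Ip filter_take_find.
Qed.

Lemma cut_props d x k : k <= size x -> has I (drop k x) ->
  [/\ all inv (cut I d x k), W (cut I d x k) = filter I (take k x) &
      size (cut I d x k) = size (filter I (take k x))].
Proof.
move=> Hk Hh.
set s := [seq p <- iota 0 k | I (nth d x p)].
set pc := fun p => take (find I (drop p.+1 x)).+2 (drop p x).
have Hpc : forall p, p \in s -> inv (pc p) /\ filter I (bl (pc p)) = [:: nth d x p].
  move=> p; rewrite mem_filter mem_iota add0n => /andP[Ip /= Hpk]; apply: piece => //.
  - exact: leq_trans Hpk Hk.
  - move: Hh; rewrite -(subnK Hpk) -drop_drop; exact: has_drop.
have Hmap : map ((fun c => filter I (bl c)) \o pc) s = map (fun p => [:: nth d x p]) s.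
  by apply/eq_in_map => p /Hpc [].
have HW : W (cut I d x k) = filter I (take k x).
  rewrite /cut -/s -/pc /W -map_comp Hmap.
  rewrite (map_comp (fun y => [:: y]) (nth d x)) flatten_seq1.
  by rewrite /s -filter_map map_nth_iota0.
split => //.
- by apply/allP => c /mapP [p Hp ->]; exact: (Hpc p Hp).1.
- have Hf : filter I (take k x) = map (nth d x) s by rewrite /s -filter_map map_nth_iota0.
  by rewrite Hf /cut -/s -/pc !size_map.
Qed.

Lemma psi_props c : inv c ->
  [/\ all inv (psi_sym phi I c), W (psi_sym phi I c) = filter I (phiw phi (bl c)) &
      size (psi_sym phi I c) = size (filter I (phiw phi (bl c)))].
Proof.
case: c => // x0 s /= Hl.
have := cut_props x0 (x := phiw phi (belast x0 s) ++ phi (last x0 s))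
                     (k := size (phiw phi (belast x0 s))).
rewrite size_cat leq_addr drop_size_cat // take_size_cat //; apply.
by []. exact: I_image.
Qed.

Lemma W_cat u v : W (u ++ v) = W u ++ W v.
Proof. by rewrite /W map_cat flatten_cat. Qed.

Lemma psiw_props cs : all inv cs ->
  [/\ all inv (psiw phi I cs), W (psiw phi I cs) = filter I (phiw phi (W cs)) &
      size (psiw phi I cs) = size (W (psiw phi I cs))].
Proof.
elim: cs => [|c cs IH] //= /andP[Hc Hcs].
have [IH1 IH2 IH3] := IH Hcs; have [P1 P2 P3] := psi_props Hc.
have -> : psiw phi I (c :: cs) = psi_sym phi I c ++ psiw phi I cs by [].
have -> : W (c :: cs) = filter I (bl c) ++ W cs by [].
rewrite all_cat P1 IH1 !W_cat size_cat P2 IH2 P3 IH3 size_cat phiw_cat filter_cat.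
by rewrite -filter_phiw IH2.
Qed.

Lemma iter_psi c n : inv c ->
  all inv (iter n (psiw phi I) [:: c]) /\ W (iter n (psiw phi I) [:: c]) = filter I (iter n (phiw phi) (bl c)).
Proof.
move=> Hc; elim: n => [|n [IH1 IH2]] /=; first by rewrite Hc /W /= cats0.
have [P1 P2 P3] := psiw_props IH1.
by rewrite P1 P2 IH2 -filter_phiw.
Qed.

Lemma size_iter_psi c n : inv c ->
  size (iter n.+1 (psiw phi I) [:: c]) = count I (iter n.+1 (phiw phi) (bl c)).
Proof.
move=> Hc; have [H1 H2] := iter_psi n Hc.
have [_ _ P3] := psiw_props H1.
rewrite iterS P3 -iterS.
by have [_ ->] := iter_psi n.+1 Hc; rewrite size_filter.
Qed.
End Aux.
Section Fact.
Variable A : finType.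
Variable phi : A -> seq A.
Variables (a : A) (v : seq A).
Hypothesis Hv : phi a = a :: v.
Hypothesis Hk : forall k, iter k (phiw phi) v <> [::].

Definition P n := iter n (phiw phi) [:: a].
Lemma PS n : P n.+1 = phiw phi (P n). Proof. by []. Qed.

Lemma phiw_cat' u w : phiw phi (u ++ w) = phiw phi u ++ phiw phi w.
Proof. by rewrite /phiw map_cat flatten_cat. Qed.

Lemma Pstep n : P n.+1 = P n ++ iter n (phiw phi) v.
Proof.
elim: n => [|n IH]; first by rewrite /P /= /phiw /= cats0 Hv.
by rewrite PS {1}IH phiw_cat' -PS.
Qed.

Lemma Psize n : n < size (P n).
Proof.
elim: n => [|n IH] //; rewrite Pstep size_cat.
have : 0 < size (iter n (phiw phi) v) by case E: (iter n (phiw phi) v) => //; have := Hk (k:=n); rewrite E.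
lia.
Qed.

Lemma Pprefix n m : n <= m -> exists r, P m = P n ++ r.
Proof.
elim: m => [|m IH]; first by rewrite leqn0 => /eqP->; exists [::]; rewrite cats0.
rewrite leq_eqVlt => /orP[/eqP->|]; first by exists [::]; rewrite cats0.
rewrite ltnS => /IH [r Hr]; exists (r ++ iter m (phiw phi) v); by rewrite Pstep Hr catA.
Qed.

Lemma Pnth n i : i < size (P n) -> phi_inf phi a i = nth a (P n) i.
Proof.
move=> Hi; rewrite /phi_inf -/(P i.+1).
have [r1 H1] := Pprefix (leq_maxl n i.+1).
have [r2 H2] := Pprefix (leq_maxr n i.+1).
have Hi1 : i < size (P i.+1) by have := Psize i.+1; lia.
have E1 : nth a (P (maxn n i.+1)) i = nth a (P n) i by rewrite H1 nth_cat Hi.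
have E2 : nth a (P (maxn n i.+1)) i = nth a (P i.+1) i by rewrite H2 nth_cat Hi1.
by rewrite -E1 E2.
Qed.

Definition inf (w : seq A) := exists n l r, P n = l ++ w ++ r.

Lemma inf_factor w : inf w -> factor_of (phi_inf phi a) w.
Proof.
move=> [n [l [r Hn]]]; exists (size l) => j Hj.
have Hs : size l + j < size (P n) by rewrite Hn !size_cat; lia.
rewrite (Pnth Hs) Hn nth_cat ltnNge leq_addr /= addKn nth_cat Hj.
exact: set_nth_default.
Qed.

Lemma factor_inf w : factor_of (phi_inf phi a) w -> inf w.
Proof.
move=> [i Hi]; set n := i + size w.
have Hn := Psize n.
exists n, (take i (P n)), (drop (size w) (drop i (P n))).
suff Hm : take (size w) (drop i (P n)) = w.
  by rewrite -{1}Hm !cat_take_drop.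
apply: (@eq_from_nth _ a).
  rewrite size_take size_drop; case: ifP => //; lia.
move=> j; rewrite size_take size_drop => Hj.
have Hj' : j < size w by move: Hj; case: ifP; lia.
rewrite nth_take // nth_drop -(Pnth (n:=n)); last by lia.
by rewrite Hi // (set_nth_default a).
Qed.

Lemma inf_phiw w : inf w -> inf (phiw phi w).
Proof.
move=> [n [l [r Hn]]]; exists n.+1, (phiw phi l), (phiw phi r).
by rewrite PS Hn !phiw_cat'.
Qed.

Lemma inf_iter m w : inf w -> inf (iter m (phiw phi) w).
Proof. elim: m => //= m IH /IH; exact: inf_phiw. Qed.

Lemma inf_sub l w r : inf (l ++ w ++ r) -> inf w.
Proof.
move=> [n [l' [r' Hn]]]; exists n, (l' ++ l), (r ++ r').
by rewrite Hn !catA.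
Qed.
End Fact.

Lemma all_take_find (A : finType) (I : pred A) (y : seq A) : all (predC I) (take (find I y) y).
Proof. elim: y => //= x y IH; case Ix: (I x) => //=; by rewrite Ix. Qed.

Lemma count_allC (A : finType) (I : pred A) (s : seq A) : all (predC I) s -> count I s = 0.
Proof. elim: s => //= x s IH /andP[/negbTE -> /IH ->]. by []. Qed.

Lemma key (A : finType) (I : pred A) (L : nat) (Q : seq A -> Prop) :
  (forall l s r, Q (l ++ s ++ r) -> Q s) ->
  (forall s, Q s -> all (predC I) s -> size s <= L) ->
  forall u, Q u -> size u <= count I u * L.+1 + L.
Proof.
move=> Hsub HL u; move: {2}(size u).+1 (ltnSn (size u)) => n.
elim: n u => // n IH u Hu Qu.
case Hh: (has I u); last first.
  have := HL u Qu; rewrite all_predC Hh => /(_ isT) H; exact: leq_trans H (leq_addl _ _).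
case: u Hu Qu Hh => // x0 u0 Hu Qu Hh.
set u := x0 :: u0.
have Hk : find I u < size u by rewrite -has_find.
have E : u = take (find I u) u ++ nth x0 u (find I u) :: drop (find I u).+1 u.
  by rewrite -(drop_nth x0 Hk) cat_take_drop.
have H1 : size (take (find I u) u) <= L.
  apply: HL; last exact: all_take_find.
  by apply: (Hsub [::] _ (nth x0 u (find I u) :: drop (find I u).+1 u)); rewrite /= -E.
have H2 := IH (drop (find I u).+1 u).
have Hs : size u = size (take (find I u) u) + (size (drop (find I u).+1 u)).+1.
  by rewrite {1}E size_cat.
have Hc : count I u = (count I (drop (find I u).+1 u)).+1.
  by rewrite {1}E count_cat count_allC ?all_take_find //= nth_find.
have Hd : size (drop (find I u).+1 u) < n by move: Hu; rewrite -/u Hs; lia.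
have Q2 : Q (drop (find I u).+1 u).
  apply: (Hsub (take (find I u) u ++ [:: nth x0 u (find I u)]) _ [::]).
  by rewrite cats0 -catA /= -E.
have := H2 Hd Q2; rewrite -/u Hs Hc; nia.
Qed.

Lemma sumn_size (A : finType) (sB : seq (seq A)) (s : seq A) : s \in sB -> size s <= sumn (map size sB).
Proof.
elim: sB => //= x sB IH; rewrite inE => /orP[/eqP->|/IH H]; first exact: leq_addr.
exact: leq_trans H (leq_addl _ _).
Qed.

Theorem proposition2 (A : finType) (phi : A -> seq A) (a : A) (I : pred A) :
  non_erasing phi ->
  extends_over phi a ->
  (forall c, c \in I <-> growing_letter phi c) ->
  (exists sB : seq (seq A), forall w,
      factor_of (phi_inf phi a) w -> bounded phi w -> w \in sB) ->
  forall c : seq A, in_C phi I a c -> psi_growing phi I c.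
Proof.
move=> Hne [v [Hv Hk]] HI [sB HB] c [t [w [t' [Hc Ht Ht' _ Hcf]]]].
set L := sumn (map size sB).
have Hinf := factor_inf Hv Hk Hcf.
have Hinft : inf phi a [:: t].
  apply: (inf_sub (l := [::]) (r := w ++ [:: t'])); by rewrite /= -Hc.
have Gt : growing_letter phi t by apply/HI.
have Hinv : inv I c by rewrite Hc /= cats1 last_rcons.
have Hbl : bl c = t :: w by rewrite Hc /= cats1 belast_rcons.
have Hbound : forall m, size (iter m (phiw phi) [:: t]) <= count I (iter m (phiw phi) [:: t]) * L.+1 + L.
  move=> m; apply: (key (Q := inf phi a)).
  - move=> l s r; exact: inf_sub.
  - move=> s Hs Hall; apply: sumn_size; apply: HB.
    + exact: (inf_factor Hv Hk Hs).
    + exact: allnotI_bounded.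
  - exact: inf_iter.
move=> M; have [N HN] := Gt (M * L.+1 + L).
exists N.+1 => [[|n]] //; rewrite ltnS => Hn.
have H1 := HN n.+1 (leqW Hn).
have H2 := Hbound n.+1.
rewrite (size_iter_psi Hne HI n Hinv) Hbl -cat1s iter_cat count_cat.
apply: leq_trans (leq_addr _ _).
have : M * L.+1 <= count I (iter n.+1 (phiw phi) [:: t]) * L.+1.
  move: (leq_trans H1 H2); by rewrite leq_add2r.
by rewrite leq_pmul2r.
Qed.
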